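(* Consider matrices $F_k,C_k\in\mathbb R^{m\times n}$, $H_k\in\mathbb R^{p\times n}$, positive definite symmetric $S_k\in\mathbb R^{m\times m}$, $R_k\in\mathbb R^{p\times p}$, and observations $y_k\in\mathbb R^p$, $k=0,1,2,\dots$, for the descriptor system $F_{k+1}x_{k+1}-C_kx_k=f_{k+1}$, $F_0x_0=f_0$, $y_k=H_kx_k+g_k$ with uncertainty set (for each horizon $\tau$) $\langle S_0f_0,f_0\rangle+\sum_{i=1}^{\tau}\langle S_{i-1}f_i,f_i\rangle+\sum_{i=0}^{\tau}\langle R_ig_i,g_i\rangle\le1$. Let $P_k,r_k,B_k$ be defined by $P_0=F_0'S_0F_0+H_0'R_0H_0$, $r_0=H_0'R_0y_0$, $B_k=P_k+C_k'S_kC_k$, and for $k\ge1$ $P_k=H_k'R_kH_k+F_k'[S_{k-1}-S_{k-1}C_{k-1}B_{k-1}^+C_{k-1}'S_{k-1}]F_k$, $r_k=F_k'S_{k-1}C_{k-1}B_{k-1}^+r_{k-1}+H_k'R_ky_k$. Let $\hat x_{k|k}$, $P_{k|k}$, $A_k$ be defined by $P_{0|0}^{-1}=F_0'S_0F_0+H_0'R_0H_0$, $\hat x_{0|0}=P_{0|0}H_0'R_0y_0$, $A_k^{-1}=S_k^{-1}+C_kP_{k|k}C_k'$, and for $k\ge1$ $P_{k|k}^{-1}=F_k'A_{k-1}F_k+H_k'R_kH_k$, $\hat x_{k|k}=P_{k|k}F_k'A_{k-1}C_{k-1}\hat x_{k-1|k-1}+P_{k|k}H_k'R_ky_k$. If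 $\mathrm{rank}\begin{bmatrix}F_k\\H_k\end{bmatrix}=n$ for all $k$, then for all $k$ the index of non-causality satisfies $I_k=0$ and $P_k^+r_k=\hat x_{k|k}$.
   Context: $A'$ denotes transpose and $A^+$ the Moore–Penrose pseudoinverse. For horizon $k$, let $X(k)$ be the set of states $x_k$ for which there exist $x_0,\dots,x_{k-1}$ such that the residuals $f_0=F_0x_0$, $f_{j+1}=F_{j+1}x_{j+1}-C_jx_j$, $g_j=y_j-H_jx_j$ ($j\le k$) satisfy the uncertainty constraint with $\tau=k$. The $\ell$-error is $\hat\rho(\ell,k):=\inf_{z\in X(k)}\sup_{x\in X(k)}|\langle\ell,x-z\rangle|$, the minimax observable subspace is $\mathcal L(k):=\{\ell\in\mathbb R^n:\hat\rho(\ell,k)<\infty\}$, and the index of non-causality is $I_k:=n-\dim\mathcal L(k)$. The observations $y_k$ are assumed generated by some trajectory whose inputs and noises satisfy the uncertainty constraint. *)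

(* Defs.v *)
From Stdlib Require ClassicalEpsilon.
From HB Require Import structures.
From mathcomp Require Import all_boot all_order all_algebra.
From mathcomp Require Import boolp classical_sets reals constructive_ereal ereal.
Set Implicit Arguments. Unset Strict Implicit. Unset Printing Implicit Defensive.
Import Order.TTheory GRing.Theory Num.Theory.
Local Open Scope ring_scope.
Local Open Scope classical_set_scope.

Section Defs.
Variable R : realType.

Definition dotv (q : nat) (u v : 'cV[R]_q) : R := (u^T *m v) 0 0.

(* Moore--Penrose pseudoinverse: the (unique) matrix satisfying the four
   Penrose conditions (it exists over any real field). *)
Definition is_mp_pinv (a b : nat) (A : 'M[R]_(a, b)) (X : 'M[R]_(b, a)) : bool :=
  [&& A *m X *m A == A, X *m A *m X == X,
      (A *m X)^T == A *m X & (X *m A)^T == X *m A].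

Definition mp_pinv (a b : nat) (A : 'M[R]_(a, b)) : 'M[R]_(b, a) :=
  ClassicalEpsilon.epsilon (inhabits 0) (fun X => is_mp_pinv A X).

Definition posdef_sym (q : nat) (M : 'M[R]_q) : Prop :=
  M^T = M /\ forall v : 'cV[R]_q, v != 0 -> 0 < dotv v (M *m v).

Variables (m n p : nat).
Variables (F C : nat -> 'M[R]_(m, n)) (H : nat -> 'M[R]_(p, n))
          (S : nat -> 'M[R]_m) (Rw : nat -> 'M[R]_p) (y : nat -> 'cV[R]_p).

Definition cost (tau : nat) (x : nat -> 'cV[R]_n) : R :=
  let f0 := F 0 *m x 0 in
  dotv (S 0 *m f0) f0
  + \sum_(1 <= i < tau.+1)
      dotv (S i.-1 *m (F i *m x i - C i.-1 *m x i.-1))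
           (F i *m x i - C i.-1 *m x i.-1)
  + \sum_(0 <= i < tau.+1)
      dotv (Rw i *m (y i - H i *m x i)) (y i - H i *m x i).

Definition Xset (k : nat) : set 'cV[R]_n :=
  [set z | exists x : nat -> 'cV[R]_n, x k = z /\ cost k x <= 1].

Definition lerror (l : 'cV[R]_n) (k : nat) : \bar R :=
  ereal_inf [set ereal_sup [set (`|dotv l (x - z)|)%:E | x in Xset k]
            | z in Xset k].

Definition Lsub (k : nat) : set 'cV[R]_n :=
  [set l | (lerror l k < +oo)%E].

Definition setdim (A : set 'cV[R]_n) : nat :=
  \max_(d < n.+1 | `[< exists M : 'M[R]_(d, n),
                        (forall i, A (row i M)^T) /\ row_free M >]) d.

Definition Inc (k : nat) : nat := (n - setdim (Lsub k))%N.

Fixpoint Pr (k : nat) : 'M[R]_n * 'cV[R]_n :=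
  match k with
  | 0 => ((F 0)^T *m S 0 *m F 0 + (H 0)^T *m Rw 0 *m H 0,
          (H 0)^T *m Rw 0 *m y 0)
  | j.+1 =>
      let Pj := (Pr j).1 in let rj := (Pr j).2 in
      let Bj := Pj + (C j)^T *m S j *m C j in
      let Bp := mp_pinv Bj in
      ((H j.+1)^T *m Rw j.+1 *m H j.+1
         + (F j.+1)^T *m (S j - S j *m C j *m Bp *m (C j)^T *m S j) *m F j.+1,
       (F j.+1)^T *m S j *m C j *m Bp *m rj + (H j.+1)^T *m Rw j.+1 *m y j.+1)
  end.

Definition Pk (k : nat) := (Pr k).1.
Definition rk (k : nat) := (Pr k).2.
Definition Bk (k : nat) := Pk k + (C k)^T *m S k *m C k.

Fixpoint KF (k : nat) : 'M[R]_n * 'cV[R]_n :=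
  match k with
  | 0 => let P00 := invmx ((F 0)^T *m S 0 *m F 0 + (H 0)^T *m Rw 0 *m H 0) in
         (P00, P00 *m (H 0)^T *m Rw 0 *m y 0)
  | j.+1 =>
      let Pjj := (KF j).1 in let xj := (KF j).2 in
      let Aj := invmx (invmx (S j) + C j *m Pjj *m (C j)^T) in
      let P' := invmx ((F j.+1)^T *m Aj *m F j.+1
                       + (H j.+1)^T *m Rw j.+1 *m H j.+1) in
      (P', P' *m (F j.+1)^T *m Aj *m C j *m xj
           + P' *m (H j.+1)^T *m Rw j.+1 *m y j.+1)
  end.

Definition Pkk (k : nat) := (KF k).1.
Definition xhat (k : nat) := (KF k).2.
Definition Ak (k : nat) := invmx (invmx (S k) + C k *m Pkk k *m (C k)^T).

End Defs.

(* Main.v *)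
Require Import Defs.
From HB Require Import structures.
From mathcomp Require Import all_boot all_order all_algebra.
From mathcomp Require Import boolp classical_sets reals constructive_ereal ereal.
From mathcomp Require Import ring lra.
From Stdlib Require ClassicalEpsilon.
Set Implicit Arguments. Unset Strict Implicit.
Import Order.TTheory GRing.Theory Num.Theory.
Local Open Scope ring_scope.

Lemma dotv_sym (R : realType) q (M : 'M[R]_q) (u v : 'cV_q) :
  M^T = M -> dotv u (M *m v) = dotv v (M *m u).
Proof.
move=> hM; rewrite /dotv.
have e : forall A : 'M[R]_1, A 0 0 = A^T 0 0 by move=> A; rewrite mxE.
rewrite [LHS]e.
by rewrite !trmx_mul trmxK hM mulmxA.
Qed.

Lemma dotv_trmul (R : realType) q r (M : 'M[R]_(q, r)) (u : 'cV_q) (v : 'cV_r) :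
  dotv u (M *m v) = dotv (M^T *m u) v.
Proof. by rewrite /dotv trmx_mul trmxK mulmxA. Qed.

Lemma dotvDr (R : realType) q (u v w : 'cV[R]_q) : dotv u (v + w) = dotv u v + dotv u w.
Proof. by rewrite /dotv mulmxDr mxE. Qed.

Lemma dotvBr (R : realType) q (u v w : 'cV[R]_q) : dotv u (v - w) = dotv u v - dotv u w.
Proof. by rewrite /dotv mulmxBr mxE !mxE. Qed.

Lemma dotvDl (R : realType) q (u v w : 'cV[R]_q) : dotv (v + w) u = dotv v u + dotv w u.
Proof. by rewrite /dotv raddfD mulmxDl mxE. Qed.

Lemma dotvZl (R : realType) q (t : R) (u v : 'cV[R]_q) : dotv (t *: v) u = t * dotv v u.
Proof. by rewrite /dotv linearZ /= -scalemxAl mxE. Qed.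

Lemma dotvZr (R : realType) q (t : R) (u v : 'cV[R]_q) : dotv u (t *: v) = t * dotv u v.
Proof. by rewrite /dotv -scalemxAr mxE. Qed.

Lemma dotv0r (R : realType) q (u : 'cV[R]_q) : dotv u 0 = 0.
Proof. by rewrite /dotv mulmx0 mxE. Qed.

Lemma pd_ge0 (R : realType) q (M : 'M[R]_q) (v : 'cV_q) :
  posdef_sym M -> 0 <= dotv v (M *m v).
Proof.
move=> [_ hM]; have [->|nz] := eqVneq v 0; first by rewrite mulmx0 dotv0r.
exact: ltW (hM _ nz).
Qed.

Lemma pd_CS (R : realType) q (M : 'M[R]_q) (u v : 'cV_q) :
  posdef_sym M -> (dotv u (M *m v))^+2 <= dotv u (M *m u) * dotv v (M *m v).
Proof.
move=> hM; have [->|nz] := eqVneq v 0.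
  by rewrite !mulmx0 !dotv0r expr0n /= mulr0.
have hb := hM.2 _ nz; set b := dotv v (M *m v) in hb *.
set a := dotv u (M *m u); set g := dotv u (M *m v).
have := pd_ge0 (u + (- g / b) *: v) hM.
rewrite mulmxDr -scalemxAr !dotvDr !dotvDl !dotvZr !dotvZl.
rewrite (dotv_sym v u hM.1) -/a -/g -/b.
move=> h.
have : 0 <= a * b - g ^+ 2.
  have e : a + - g / b * g + (- g / b * g + - g / b * (- g / b * b)) = (a * b - g ^+ 2) / b.
    by field; rewrite gt_eqF.
  rewrite e in h; have := mulr_ge0 h (ltW hb).
  by rewrite -mulrA mulVf ?gt_eqF // mulr1.
lra.
Qed.

Lemma pd_unit (R : realType) q (M : 'M[R]_q) : posdef_sym M -> M \in unitmx.
Proof.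
move=> [hs hp]; rewrite -unitmx_tr -row_free_unit -kermx_eq0.
apply/negPn/negP => /eqP nz.
have [i hi] : exists i, row i (kermx M^T) != 0.
  apply/existsP; rewrite -negb_forall; apply/negP => /forallP h.
  apply: nz; apply/row_matrixP => i; rewrite row0; exact/eqP/h.
set w := row i (kermx M^T) in hi.
have hw : w *m M^T = 0 by rewrite /w -row_mul mulmx_ker row0.
have := hp w^T; rewrite trmx_eq0 => /(_ hi).
have -> : M *m w^T = 0 by rewrite -[M]trmxK -trmx_mul hw trmx0.
by rewrite dotv0r ltxx.
Qed.

Lemma sq_bound (R : realType) (x c : R) : x ^+ 2 <= c -> `|x| <= 1 + c.
Proof.
move=> h; have [le1|gt1] := lerP `|x| 1.
  have : 0 <= c by apply: le_trans h; exact: sqr_ge0.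
  lra.
have : `|x| <= `|x| ^+ 2 by rewrite expr2 ler_peMr // ltW.
rewrite real_normK ?num_real //; lra.
Qed.

Lemma pd_bound (R : realType) q (M : 'M[R]_q) (a : 'cV_q) : posdef_sym M ->
  exists K, forall v, dotv (M *m v) v <= 1 -> `|dotv a v| <= K.
Proof.
move=> hM; set u := invmx M *m a.
exists (1 + dotv u (M *m u)) => v hv.
have ea : a = M *m u by rewrite /u mulmxA mulmxV ?pd_unit // mul1mx.
have -> : dotv a v = dotv u (M *m v).
  by rewrite ea dotv_trmul hM.1.
apply: sq_bound; apply: (le_trans (pd_CS u v hM)).
have hv' : dotv v (M *m v) <= 1 by rewrite dotv_trmul hM.1.
rewrite -{2}[dotv u (M *m u)]mulr1; apply: ler_wpM2l => //; exact: pd_ge0.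
Qed.

Lemma rank_decomp (R : realType) m p n (F : 'M[R]_(m, n)) (H : 'M[R]_(p, n)) :
  \rank (col_mx F H) = n -> forall l : 'cV_n, exists a b,
  forall v, dotv l v = dotv a (F *m v) + dotv b (H *m v).
Proof.
move=> hr l.
have : (l^T <= col_mx F H)%MS by apply: submx_full; rewrite /row_full hr.
case/submxP => D hD.
exists (lsubmx D)^T, (rsubmx D)^T => v.
rewrite /dotv !trmxK hD -[D]hsubmxK mul_row_col row_mxKl row_mxKr.
by rewrite mulmxDl !mulmxA mxE.
Qed.

Lemma rank_inj (R : realType) m p n (F : 'M[R]_(m, n)) (H : 'M[R]_(p, n)) (v : 'cV_n) :
  \rank (col_mx F H) = n -> F *m v = 0 -> H *m v = 0 -> v = 0.
Proof.
move=> hr hF hH.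
have hf : row_free (col_mx F H)^T by rewrite /row_free mxrank_tr hr.
apply/eqP; rewrite -trmx_eq0 -(mulmx_free_eq0 _ hf) -trmx_mul mul_col_mx hF hH.
by rewrite col_mx0 trmx0.
Qed.

Lemma pd_inv (R : realType) q (M : 'M[R]_q) : posdef_sym M -> posdef_sym (invmx M).
Proof.
move=> hM; have hu := pd_unit hM; split; first by rewrite trmx_inv hM.1.
move=> v nz; set w := invmx M *m v.
have ev : v = M *m w by rewrite /w mulmxA mulmxV // mul1mx.
have nw : w != 0 by apply: contraNneq nz => e; rewrite ev e mulmx0.
rewrite {1}ev; have := hM.2 _ nw; by rewrite dotv_trmul hM.1.
Qed.

Lemma pd_add (R : realType) q (A B : 'M[R]_q) : posdef_sym A -> B^T = B ->
  (forall v, 0 <= dotv v (B *m v)) -> posdef_sym (A + B).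
Proof.
move=> hA hB hB0; split; first by rewrite raddfD /= hA.1 hB.
move=> v nz; rewrite mulmxDl dotvDr; apply: ltr_wpDr; [exact: hB0 | exact: hA.2].
Qed.

Lemma psd_conj (R : realType) q r (P : 'M[R]_q) (C : 'M[R]_(q, r)) :
  posdef_sym P -> (C^T *m P *m C)^T = C^T *m P *m C /\
  forall v, 0 <= dotv v (C^T *m P *m C *m v).
Proof.
move=> hP; split; first by rewrite !trmx_mul trmxK hP.1 mulmxA.
move=> v; rewrite -!mulmxA dotv_trmul trmxK; exact: pd_ge0.
Qed.

Lemma pd_FH (R : realType) m p n (F : 'M[R]_(m, n)) (H : 'M[R]_(p, n))
  (W : 'M[R]_m) (Q : 'M[R]_p) :
  \rank (col_mx F H) = n -> posdef_sym W -> posdef_sym Q ->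
  posdef_sym (F^T *m W *m F + H^T *m Q *m H).
Proof.
move=> hr hW hQ; have [s1 p1] := psd_conj F hW; have [s2 p2] := psd_conj H hQ.
split; first by rewrite raddfD /= s1 s2.
move=> v nz; rewrite mulmxDl dotvDr.
have e1 : dotv v (F^T *m W *m F *m v) = dotv (F *m v) (W *m (F *m v)).
  by rewrite -!mulmxA dotv_trmul trmxK.
have e2 : dotv v (H^T *m Q *m H *m v) = dotv (H *m v) (Q *m (H *m v)).
  by rewrite -!mulmxA dotv_trmul trmxK.
have [hF|hF] := eqVneq (F *m v) 0.
  have [hH|hH] := eqVneq (H *m v) 0.
    by move: nz; rewrite (rank_inj hr hF hH) eqxx.
  by apply: ltr_wpDl; [exact: p1 | rewrite e2; exact: hQ.2].
by apply: ltr_wpDr; [exact: p2 | rewrite e1; exact: hW.2].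
Qed.

Lemma mp_pinv_unit (R : realType) q (A : 'M[R]_q) : A \in unitmx -> mp_pinv A = invmx A.
Proof.
move=> hA; rewrite /mp_pinv.
have := ClassicalEpsilon.epsilon_spec (inhabits 0) (fun X => is_mp_pinv A X).
set X := ClassicalEpsilon.epsilon _ _ => h.
have /h /and4P [/eqP h1 _ _ _] : exists X, is_mp_pinv A X.
  exists (invmx A); apply/and4P; split; apply/eqP.
  - by rewrite mulmxV // mul1mx.
  - by rewrite mulVmx // mul1mx.
  - by rewrite mulmxV // trmx1.
  - by rewrite mulVmx // trmx1.
have : invmx A *m (A *m X *m A) *m invmx A = invmx A *m A *m invmx A by rewrite h1.
rewrite !mulmxA mulVmx // mul1mx -mulmxA mulmxV // mulmx1.
by rewrite mul1mx.
Qed.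

Lemma zmod_aux (V : zmodType) (x a b : V) : x - a + b - (b - a) = x.
Proof. by rewrite opprB !addrA (addrAC (x - a) b a) addrK subrK. Qed.

Lemma zmod_aux2 (V : zmodType) (x a : V) : x - (x - a) = a.
Proof. by rewrite opprB addrC subrK. Qed.

Lemma woodbury (R : realType) m n (S : 'M[R]_m) (C : 'M[R]_(m, n)) (P : 'M[R]_n) :
  S \in unitmx -> P \in unitmx -> (P + C^T *m S *m C) \in unitmx ->
  invmx (invmx S + C *m invmx P *m C^T)
  = S - S *m C *m invmx (P + C^T *m S *m C) *m C^T *m S.
Proof.
move=> hS hP; set B := P + _ => hB.
have hCSC : C^T *m S *m C = B - P by rewrite /B addrC addKr.
have K1 : C *m invmx P *m C^T *m S *m C *m invmx B = C *m invmx P - C *m invmx B.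
  have -> : C *m invmx P *m C^T *m S *m C = C *m invmx P *m (C^T *m S *m C).
    by rewrite !mulmxA.
  rewrite hCSC mulmxBr mulmxBl.
  by rewrite -(mulmxA _ B) mulmxV // mulmx1 -(mulmxA C _ P) mulVmx // mulmx1.
set W := S - _.
have hXW : (invmx S + C *m invmx P *m C^T) *m W = 1%:M.
  rewrite /W mulmxDl !mulmxBr !mulmxA mulVmx // !mul1mx K1.
  by rewrite !mulmxBl zmod_aux2 subrK.
have [hX _] := mulmx1_unit hXW.
by rewrite -[LHS]mulmx1 -hXW mulmxA mulVmx // mul1mx.
Qed.

Lemma woodbury_C (R : realType) m n (S : 'M[R]_m) (C : 'M[R]_(m, n)) (P : 'M[R]_n) :
  (P + C^T *m S *m C) \in unitmx ->
  (S - S *m C *m invmx (P + C^T *m S *m C) *m C^T *m S) *m C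
  = S *m C *m invmx (P + C^T *m S *m C) *m P.
Proof.
set B := P + _ => hB.
have hCSC : C^T *m S *m C = B - P by rewrite /B addrC addKr.
rewrite mulmxBl -!mulmxA [C^T *m (S *m C)]mulmxA hCSC !mulmxA mulmxBr.
by rewrite -!mulmxA mulVmx // mulmx1 !mulmxA zmod_aux2.
Qed.

Lemma main_inv (R : realType) (m n p : nat)
  (F C : nat -> 'M[R]_(m, n)) (H : nat -> 'M[R]_(p, n))
  (S : nat -> 'M[R]_m) (Rw : nat -> 'M[R]_p) (y : nat -> 'cV[R]_p)
  (hS : forall k, posdef_sym (S k))
  (hR : forall k, posdef_sym (Rw k))
  (hrank : forall k, \rank (col_mx (F k) (H k)) = n) :
  forall k, posdef_sym (Pk F C H S Rw y k) /\
    Pkk F C H S Rw y k = invmx (Pk F C H S Rw y k) /\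
    rk F C H S Rw y k = Pk F C H S Rw y k *m xhat F C H S Rw y k.
Proof.
elim=> [|j [hP [hPkk hr]]].
  have hP0 := pd_FH (hrank 0%N) (hS 0%N) (hR 0%N).
  split; first exact: hP0.
  split; first by [].
  rewrite /xhat /Pk /rk /=.
  by rewrite !mulmxA mulmxV ?pd_unit // mul1mx.
set P := Pk F C H S Rw y j in hP hPkk hr.
set x := xhat F C H S Rw y j in hr.
have hB : posdef_sym (P + (C j)^T *m S j *m C j).
  have [s1 p1] := psd_conj (C j) (hS j); exact: pd_add hP s1 p1.
have hBu := pd_unit hB.
have hSu := pd_unit (hS j); have hPu := pd_unit hP.
set W := S j - S j *m C j *m invmx (P + (C j)^T *m S j *m C j) *m (C j)^T *m S j.
have hW : invmx (invmx (S j) + C j *m invmx P *m (C j)^T) = W by exact: woodbury.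
have hWpd : posdef_sym W.
  rewrite -hW; apply: pd_inv.
  have [s1 p1] := psd_conj (C j)^T (pd_inv hP); rewrite trmxK in s1 p1.
  exact: pd_add (pd_inv (hS j)) s1 p1.
have hA : Ak F C H S Rw y j = W by rewrite /Ak hPkk.
have eP : Pk F C H S Rw y j.+1 = (F j.+1)^T *m W *m F j.+1 + (H j.+1)^T *m Rw j.+1 *m H j.+1.
  rewrite addrC /Pk /= -/(Pk F C H S Rw y j) -/P mp_pinv_unit //.
have hP' : posdef_sym (Pk F C H S Rw y j.+1) by rewrite eP; exact: pd_FH.
have hP'u := pd_unit hP'.
have ePkk : Pkk F C H S Rw y j.+1 = invmx (Pk F C H S Rw y j.+1).
  by rewrite eP -hA.
split => //; split => //.
have ex : xhat F C H S Rw y j.+1 =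
  Pkk F C H S Rw y j.+1 *m (F j.+1)^T *m Ak F C H S Rw y j *m C j *m x
  + Pkk F C H S Rw y j.+1 *m (H j.+1)^T *m Rw j.+1 *m y j.+1 by [].
rewrite ex ePkk hA mulmxDr !mulmxA mulmxV // !mul1mx.
rewrite /rk /= -/(rk F C H S Rw y j) hr /P mp_pinv_unit // -/P.
congr (_ + _).
rewrite -!mulmxA; congr (_ *m _); rewrite !mulmxA -(woodbury_C hBu) -/W.
by [].
Qed.

Lemma term_le_sum (R : realType) (a b i : nat) (f : nat -> R) :
  (forall j, 0 <= f j) -> (a <= i < b)%N -> f i <= \sum_(a <= j < b) f j.
Proof.
move=> h /andP [hai hib].
rewrite (big_cat_nat (n := i)) //=; last exact: ltnW.
rewrite (@big_ltn _ _ _ i) //.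
have h1 : 0 <= \sum_(a <= j < i) f j by apply: sumr_ge0.
have h2 : 0 <= \sum_(i.+1 <= j < b) f j by apply: sumr_ge0.
have := h i; lra.
Qed.

Lemma pd_term_ge0 (R : realType) q (M : 'M[R]_q) (v : 'cV_q) :
  posdef_sym M -> 0 <= dotv (M *m v) v.
Proof. by move=> hM; rewrite -{1}hM.1 -dotv_trmul; exact: pd_ge0. Qed.

Lemma cost_terms (R : realType) (m n p : nat)
  (F C : nat -> 'M[R]_(m, n)) (H : nat -> 'M[R]_(p, n))
  (S : nat -> 'M[R]_m) (Rw : nat -> 'M[R]_p) (y : nat -> 'cV[R]_p)
  (hS : forall k, posdef_sym (S k))
  (hR : forall k, posdef_sym (Rw k)) tau x :
  cost F C H S Rw y tau x <= 1 ->
  [/\ dotv (S 0%N *m (F 0%N *m x 0%N)) (F 0%N *m x 0%N) <= 1,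
      forall i, (1 <= i <= tau)%N ->
        dotv (S i.-1 *m (F i *m x i - C i.-1 *m x i.-1))
           (F i *m x i - C i.-1 *m x i.-1) <= 1 &
      forall i, (i <= tau)%N ->
        dotv (Rw i *m (y i - H i *m x i)) (y i - H i *m x i) <= 1].
Proof.
rewrite /cost /=.
set A := dotv _ _.
set s1 := \sum_(1 <= i < tau.+1) _.
set s2 := \sum_(0 <= i < tau.+1) _.
move=> hc.
have hA : 0 <= A by apply: pd_term_ge0.
have h1 : 0 <= s1 by apply: sumr_ge0 => i _; apply: pd_term_ge0.
have h2 : 0 <= s2 by apply: sumr_ge0 => i _; apply: pd_term_ge0.
split.
- lra.
- move=> i hi.
  have : dotv (S i.-1 *m (F i *m x i - C i.-1 *m x i.-1))
           (F i *m x i - C i.-1 *m x i.-1) <= s1.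
    rewrite /s1; apply: (@term_le_sum R 1%N tau.+1 i (fun i => dotv (S i.-1 *m (F i *m x i - C i.-1 *m x i.-1))
           (F i *m x i - C i.-1 *m x i.-1))) => //; first by move=> j; apply: pd_term_ge0.
  lra.
- move=> i hi.
  have : dotv (Rw i *m (y i - H i *m x i)) (y i - H i *m x i) <= s2.
    rewrite /s2; apply: (@term_le_sum R 0%N tau.+1 i (fun i => dotv (Rw i *m (y i - H i *m x i)) (y i - H i *m x i))) => //.
    by move=> j; apply: pd_term_ge0.
  lra.
Qed.

Lemma split_H (R : realType) p n (b y : 'cV[R]_p) (H : 'M[R]_(p, n)) (x : 'cV_n) :
  dotv b (H *m x) = dotv b y - dotv b (y - H *m x).
Proof. by rewrite dotvBr zmod_aux2. Qed.

Lemma xbound (R : realType) (m n p : nat)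
  (F C : nat -> 'M[R]_(m, n)) (H : nat -> 'M[R]_(p, n))
  (S : nat -> 'M[R]_m) (Rw : nat -> 'M[R]_p) (y : nat -> 'cV[R]_p)
  (hS : forall k, posdef_sym (S k))
  (hR : forall k, posdef_sym (Rw k))
  (hrank : forall k, \rank (col_mx (F k) (H k)) = n) k :
  forall j, (j <= k)%N -> forall l : 'cV_n, exists K, forall x,
    cost F C H S Rw y k x <= 1 -> `|dotv l (x j)| <= K.
Proof.
elim=> [|j IH] hj l.
  have [a [b hab]] := rank_decomp (hrank 0%N) l.
  have [K1 h1] := pd_bound a (hS 0%N).
  have [K2 h2] := pd_bound b (hR 0%N).
  exists (K1 + (`|dotv b (y 0%N)| + K2)) => x hx.
  have [c1 _ c3] := cost_terms hS hR hx.
  rewrite hab (split_H _ (y 0%N)).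
  have := h1 _ c1; have := h2 _ (c3 0%N isT).
  have := ler_normD (dotv a (F 0%N *m x 0%N))
     (dotv b (y 0%N) - dotv b (y 0%N - H 0%N *m x 0%N)).
  have := ler_normB (dotv b (y 0%N)) (dotv b (y 0%N - H 0%N *m x 0%N)).
  lra.
have [a [b hab]] := rank_decomp (hrank j.+1) l.
have [K1 h1] := pd_bound a (hS j).
have [K2 h2] := pd_bound b (hR j.+1).
have [K3 h3] := IH (ltnW hj) ((C j)^T *m a).
exists (K1 + K3 + (`|dotv b (y j.+1)| + K2)) => x hx.
have [_ c2 c3] := cost_terms hS hR hx.
rewrite hab (split_H _ (y j.+1)).
have -> : F j.+1 *m x j.+1 = (F j.+1 *m x j.+1 - C j *m x j) + C j *m x j.
  by rewrite subrK.
rewrite (dotvDr a) (dotv_trmul (C j)).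
have := h1 _ (c2 j.+1 hj); have := h2 _ (c3 j.+1 hj); have := h3 _ hx.
have := ler_normD (dotv a (F j.+1 *m x j.+1 - C j *m x j) + dotv ((C j)^T *m a) (x j))
     (dotv b (y j.+1) - dotv b (y j.+1 - H j.+1 *m x j.+1)).
have := ler_normD (dotv a (F j.+1 *m x j.+1 - C j *m x j)) (dotv ((C j)^T *m a) (x j)).
have := ler_normB (dotv b (y j.+1)) (dotv b (y j.+1 - H j.+1 *m x j.+1)).
lra.
Qed.

Local Open Scope classical_set_scope.

Theorem corollary1 (R : realType) (m n p : nat)
  (F C : nat -> 'M[R]_(m, n)) (H : nat -> 'M[R]_(p, n))
  (S : nat -> 'M[R]_m) (Rw : nat -> 'M[R]_p) (y : nat -> 'cV[R]_p)
  (hS : forall k, posdef_sym (S k))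
  (hR : forall k, posdef_sym (Rw k))
  (hy : exists x : nat -> 'cV[R]_n,
          forall tau, cost F C H S Rw y tau x <= 1)
  (hrank : forall k, \rank (col_mx (F k) (H k)) = n) :
  forall k : nat,
    Inc F C H S Rw y k = 0%N /\
    mp_pinv (Pk F C H S Rw y k) *m rk F C H S Rw y k = xhat F C H S Rw y k.
Proof.
move=> k; split; last first.
  have [hP [_ hr]] := main_inv C y hS hR hrank k.
  by rewrite mp_pinv_unit ?pd_unit // hr mulmxA mulVmx ?pd_unit // mul1mx.
have hL : forall l, Lsub F C H S Rw y k l.
  move=> l; rewrite /Lsub /=.
  have [x0 hx0] := hy.
  have [K hK] := xbound C y hS hR hrank (leqnn k) l.
  have hz : Xset F C H S Rw y k (x0 k) by exists x0.
  apply: (le_lt_trans (y := ((K + K)%:E)%E)); last exact: ltry.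
  apply: (le_trans (ereal_inf_lbound _)); first by exists (x0 k).
  apply: ge_ereal_sup => _ [x [xx [<- hxx]] <-].
  rewrite lee_fin dotvBr.
  have := hK _ hxx; have := hK _ (hx0 k).
  have := ler_normB (dotv l (xx k)) (dotv l (x0 k)).
  lra.
rewrite /Inc; apply/eqP; rewrite subn_eq0.
apply: (leq_trans _ (leq_bigmax_cond (ord_max) _)) => //=.
apply: asboolT; exists 1%:M; split; first by move=> i; exact: hL.
by rewrite row_free_unit unitmx1.
Qed.
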